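(* Let $\mathfrak{G}_{\Sigma_{1,0}}$ be the Goldman Lie algebra of the closed torus, taken over $\mathbb{Q}$. Then $\mathfrak{G}_{\Sigma_{1,0}}$ is finitely generated as a Lie algebra over $\mathbb{Q}$.
   Context: Let $\Sigma_{1,0}=T^2$ be the closed oriented torus, and let $\hat\pi$ be the set of free homotopy classes of loops on it. Since $\pi_1(T^2)\cong\mathbb{Z}^2$ is abelian, $\hat\pi$ is identified with $\mathbb{Z}^2$; writing $a,b$ for the two standard generators, every element of $\hat\pi$ is written $a^ib^j$ with $(i,j)\in\mathbb{Z}^2$, and $1=a^0b^0$ denotes the class of the contractible loop. The Goldman bracket of two classes $\alpha,\beta$ (represented by loops meeting in transverse double points) is $[\alpha,\beta]=\sum_{p\in\alpha\cap\beta}\epsilon(p)\,\alpha*_p\beta$, where $\epsilon(p)=\pm1$ is the sign of the intersection at $p$ with respect to the orientation and $\alpha*_p\beta$ is the loop obtained by traversing $\alpha$ from $p$ and then $\beta$ from $p$; it is extended bilinearly. On the torus this gives $[a^ib^j,a^kb^l]=(il-jk)\,a^{i+k}b^{j+l}$. The Goldman Lie algebra $\mathfrak{G}_{\Sigma_{1,0}}$ over $\mathbb{Q}$ is the $\mathbb{Q}$-vector space with basis $\hat\pi$ equipped with this bracket. *)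

(* Defs.v *)
From HB Require Import structures.
From mathcomp Require Import all_boot all_order all_algebra.
From mathcomp Require Import finmap.
From mathcomp.multinomials Require Import monalg.
Set Implicit Arguments. Unset Strict Implicit. Unset Printing Implicit Defensive.
Import Order.TTheory GRing.Theory Num.Theory.
Local Open Scope ring_scope.

(* pi-hat(T^2) = Z^2 : the class a^i b^j is the pair (i, j). *)
Definition loopclass := (int * int)%type.

Definition goldman := {malg rat[loopclass]}.

Definition gbasis (p : loopclass) : goldman := << p >>.

Definition gdet (p q : loopclass) : int := p.1 * q.2 - p.2 * q.1.

(* bilinear extension of [a^i b^j, a^k b^l] = (il - jk) a^(i+k) b^(j+l) *)
Definition gbracket (x y : goldman) : goldman :=
  \sum_(p <- msupp x) \sum_(q <- msupp y)
     << (x@_p * y@_q * (gdet p q)%:~R) *g (p.1 + q.1, p.2 + q.2) >>.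

Inductive lie_gen (S : seq goldman) : goldman -> Prop :=
| lie_gen_in x : x \in S -> lie_gen S x
| lie_gen_0 : lie_gen S 0
| lie_gen_add x y : lie_gen S x -> lie_gen S y -> lie_gen S (x + y)
| lie_gen_scale (c : rat) x : lie_gen S x -> lie_gen S (c *: x)
| lie_gen_br x y : lie_gen S x -> lie_gen S y -> lie_gen S (gbracket x y).

Definition finitely_generated_goldman : Prop :=
  exists S : seq goldman, forall x : goldman, lie_gen S x.

(* Main.v *)
Require Import Defs.
From mathcomp Require Import all_boot all_algebra.
From mathcomp Require Import finmap.
From mathcomp.multinomials Require Import monalg.
From mathcomp Require Import zify.
Import GRing.Theory.
Local Open Scope ring_scope.

Lemma scaleU (c : rat) (k : loopclass) : c *: gbasis k = << c *g k >> :> goldman.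
Proof.
apply/malgP => k'; rewrite mcoeffZ /gbasis !mcoeffU.
by case: (k == k'); rewrite ?mulr1 ?mulr0.
Qed.

Lemma br_basis p q : gbracket (gbasis p) (gbasis q) =
  (gdet p q)%:~R *: gbasis (p.1 + q.1, p.2 + q.2).
Proof.
rewrite /gbracket /gbasis !msuppU oner_eq0 /= !big_seq_fset1 !mcoeffUU !mul1r.
by rewrite scaleU.
Qed.

Lemma int_move (P : int -> Prop) (i0 : int) :
  (forall i, P i -> P (i + 1)) -> (forall i, P i -> P (i - 1)) -> P i0 ->
  forall i, P i.
Proof.
move=> Hu Hd H0 i.
have -> : i = i0 + (i - i0) by lia.
case: (i - i0) => n.
  elim: n => [|n IH]; first by rewrite addr0.
  have -> : i0 + (Posz n.+1) = (i0 + Posz n) + 1 by lia.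
  exact: Hu.
elim: n => [|n IH].
  have -> : i0 + Negz 0 = i0 - 1 by rewrite NegzE.
  exact: Hd.
have -> : i0 + Negz n.+1 = (i0 + Negz n) - 1 by rewrite !NegzE; lia.
exact: Hd.
Qed.

Definition S0 : seq goldman :=
  [:: gbasis (0,0); gbasis (1,0); gbasis (-1,0); gbasis (0,1); gbasis (0,-1)].

Lemma step g p : lie_gen S0 (gbasis g) -> lie_gen S0 (gbasis p) -> gdet g p != 0 ->
  lie_gen S0 (gbasis (g.1 + p.1, g.2 + p.2)).
Proof.
move=> Hg Hp Hd.
have := lie_gen_scale ((gdet g p)%:~R^-1) (lie_gen_br Hg Hp).
by rewrite br_basis scalerA mulVf ?scale1r // intr_eq0.
Qed.

Lemma gen_in p : gbasis p \in S0 -> lie_gen S0 (gbasis p).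
Proof. by move=> H; apply: lie_gen_in. Qed.

Lemma mem1 : gbasis (1,0) \in S0. Proof. apply: mem_behead; exact: mem_head. Qed.
Lemma mem2 : gbasis (-1,0) \in S0. Proof. apply: mem_behead; apply: mem_behead; exact: mem_head. Qed.
Lemma mem3 : gbasis (0,1) \in S0. Proof. apply: mem_behead; apply: mem_behead; apply: mem_behead; exact: mem_head. Qed.
Lemma mem4 : gbasis (0,-1) \in S0. Proof. apply: mem_behead; apply: mem_behead; apply: mem_behead; apply: mem_behead; exact: mem_head. Qed.
Lemma mem0 : gbasis (0,0) \in S0. Proof. exact: mem_head. Qed.

Lemma move_i (j : int) : j != 0 -> forall i0, lie_gen S0 (gbasis (i0, j)) ->
  forall i, lie_gen S0 (gbasis (i, j)).
Proof.
move=> Hj i0 H0; apply: (@int_move (fun i => lie_gen S0 (gbasis (i, j))) i0 _ _ H0).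
  move=> i Hi.
  have -> : (i + 1, j) = (((1,0) : loopclass).1 + i, ((1,0) : loopclass).2 + j) :> loopclass by rewrite /= add0r addrC.
  apply: (@step (1,0) (i,j)); [exact: gen_in mem1 | exact: Hi | rewrite /gdet /=; lia].
move=> i Hi.
have -> : (i - 1, j) = (((-1,0) : loopclass).1 + i, ((-1,0) : loopclass).2 + j) :> loopclass by rewrite /= add0r addrC.
apply: (@step (-1,0) (i,j)); [exact: gen_in mem2 | exact: Hi | rewrite /gdet /=; lia].
Qed.

Lemma move_j (i : int) : i != 0 -> forall j0, lie_gen S0 (gbasis (i, j0)) ->
  forall j, lie_gen S0 (gbasis (i, j)).
Proof.
move=> Hi j0 H0; apply: (@int_move (fun j => lie_gen S0 (gbasis (i, j))) j0 _ _ H0).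
  move=> j Hj.
  have -> : (i, j + 1) = (((0,1) : loopclass).1 + i, ((0,1) : loopclass).2 + j) :> loopclass by rewrite /= add0r addrC.
  apply: (@step (0,1) (i,j)); [exact: gen_in mem3 | exact: Hj | rewrite /gdet /=; lia].
move=> j Hj.
have -> : (i, j - 1) = (((0,-1) : loopclass).1 + i, ((0,-1) : loopclass).2 + j) :> loopclass by rewrite /= add0r addrC.
apply: (@step (0,-1) (i,j)); [exact: gen_in mem4 | exact: Hj | rewrite /gdet /=; lia].
Qed.

Lemma all_basis p : lie_gen S0 (gbasis p).
Proof.
have H1 : forall i, lie_gen S0 (gbasis (i, 1)).
  exact: (@move_i 1 isT 0 (gen_in _ mem3)).
have Hnz : forall i j, i != 0 -> lie_gen S0 (gbasis (i, j)).
  by move=> i j Hi; exact: (@move_j i Hi 1 (H1 i) j).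
case: p => i j.
have [->|Hi] := eqVneq i 0; last exact: Hnz.
have [->|Hj] := eqVneq j 0; first exact: gen_in mem0.
exact: (@move_i j Hj 1 (Hnz 1 j isT) 0).
Qed.

Theorem mainTheorem1 :
  exists S : seq goldman, forall x : goldman, lie_gen S x.
Proof.
exists S0 => x; rewrite (monalgE x).
elim/big_rec: _ => [|k y _ Hy]; first exact: lie_gen_0.
apply: lie_gen_add Hy; rewrite -scaleU; exact/lie_gen_scale/all_basis.
Qed.
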